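(* Let $p$ be a prime, $q>2$ a power of $p$, and $F$ a field of characteristic $p$ containing $\mathbb{F}_q$ which is a regular extension of $\mathbb{F}_q$. Let $L\in F[x]$ be a $q$-polynomial of $q$-degree $2$ such that $L(x)/x$ is irreducible over $F$, let $E$ be the splitting field of $L$ over $F$, and suppose that the Galois group $G$ of $E$ over $F$, viewed as a subgroup of $GL(2,q)$ via its action on the 2-dimensional $\mathbb{F}_q$-space $V$ of roots of $L$, contains $SL(2,q)$. Let $v_1,v_2$ be an $\mathbb{F}_q$-basis of $V$. Then for every $r\geq1$ the evaluation map $\epsilon_r:H_{2,r}(\mathbb{F}_q)\to E$, $\epsilon_r(P)=P(v_1,v_2)$, is injective.
   Context: $F$ is a regular extension of $\mathbb{F}_q$ means that the only elements of $F$ algebraic over $\mathbb{F}_q$ are those of $\mathbb{F}_q$. $H_{2,r}(\mathbb{F}_q)$ is the space of homogeneous polynomials of degree $r$ in $\mathbb{F}_q[x_1,x_2]$ together with $0$. A $q$-polynomial of $q$-degree $2$ is $a_0x+a_1x^q+a_2x^{q^2}$ with $a_2\neq0$. *)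

(* Defs.v *)
From HB Require Import structures.
From mathcomp Require Import all_boot all_order all_algebra all_fingroup all_field.
From mathcomp Require Import mpoly.
Set Implicit Arguments. Unset Strict Implicit. Unset Printing Implicit Defensive.
Import GRing.Theory.
Local Open Scope ring_scope.

Definition qpoly2 (R : nzRingType) (q : nat) (a0 a1 a2 : R) : {poly R} :=
  a0 *: 'X + a1 *: 'X^q + a2 *: 'X^(q ^ 2).

Definition regular_ext (K : finFieldType) (F : fieldType) (iota : {rmorphism K -> F}) :=
  forall a : F, (exists2 P : {poly K}, P != 0 & root (map_poly iota P) a) ->
    exists b : K, a = iota b.

Definition eval2 (K E : nzRingType) (f : K -> E) (v1 v2 : E) (P : {mpoly K[2]}) : E :=
  mmap f (fun i : 'I_2 => if val i == 0%N then v1 else v2) P.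

(* Main.v *)
From HB Require Import structures.
From mathcomp Require Import all_boot all_order all_algebra all_fingroup all_field.
From mathcomp Require Import mpoly ring.
Require Import Defs.
Import GRing.Theory.
Local Open Scope ring_scope.
Lemma fix_in_image (K : finFieldType) (E : fieldType) (A : {rmorphism K -> E}) (c : E) :
  c ^+ #|K| = c -> exists b, c = A b.
Proof.
move=> hc; have [/mapP[b _ ->]|nin] := boolP (c \in map A (enum K)); first by exists b.
exfalso; pose P : {poly E} := 'X^#|K| - 'X.
have szP : size P = #|K|.+1.
  by rewrite size_polyDl ?size_polyXn // size_polyN size_polyX ltnS (finNzRing_gt1 K).
have P0 : P != 0 by rewrite -size_poly_eq0 szP.
have := @max_poly_roots _ P (c :: map A (enum K)) P0.
have rootP x : x ^+ #|K| = x -> root P x.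
  by move=> hx; rewrite /root !hornerE hx subrr.
rewrite /= size_map -cardE szP ltnn.
move=> H; suff: false by []; apply: H; first (rewrite rootP //=; apply/allP=> _ /mapP[b _ ->]; apply: rootP; by rewrite -rmorphXn expf_card).
by rewrite nin map_inj_uniq ?enum_uniq //; exact: fmorph_inj.
Qed.
Section Frob.
Variables (E : fieldType) (N : nat).
Definition frN (HN : [pchar E].-nat N) (x : E) := x ^+ N.
Variable HN : [pchar E].-nat N.
Fact frN_nmod : nmod_morphism (frN HN).
Proof.
split; first by rewrite /frN expr0n; case/andP: HN => /lt0n_neq0 /negbTE ->.
by move=> x y; rewrite /frN exprDn_pchar.
Qed.
Fact frN_monoid : monoid_morphism (frN HN).
Proof. by split=> [|x y]; rewrite /frN ?expr1n // exprMn. Qed.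
HB.instance Definition _ := GRing.isNmodMorphism.Build E E (frN HN) frN_nmod.
HB.instance Definition _ := GRing.isMonoidMorphism.Build E E (frN HN) frN_monoid.
Lemma frN_inj : injective (frN HN).
Proof. exact: fmorph_inj. Qed.
End Frob.
Arguments frN {E N}.
Arguments frN_inj {E N}.

Section Main.
Variables (K : finFieldType) (E : fieldType) (A : {rmorphism K -> E}).
Hypothesis hq : [pchar E].-nat #|K|.
Local Notation q := #|K|.

Lemma hqi i : [pchar E].-nat (q ^ i)%N.
Proof. by rewrite pnatX hq. Qed.

Lemma root_frob (g : {poly K}) x :
  root (map_poly A g) x -> root (map_poly A g) (x ^+ q).
Proof.
move=> /eqP r; apply/eqP.
have -> : x ^+ q = frN hq x by [].
have := horner_map (frN hq) (map_poly A g) x; rewrite r rmorph0 -map_poly_comp => <-.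
congr (_.[_]); apply: eq_map_poly => b /=.
by rewrite /frN -rmorphXn expf_card.
Qed.

Lemma periodic (g : {poly K}) (t : E) : g != 0 -> root (map_poly A g) t ->
  exists2 n, (0 < n)%N & t ^+ (q ^ n)%N = t.
Proof.
move=> g0 rt; set G := map_poly A g.
have G0 : G != 0 by rewrite map_poly_eq0.
have rti i : root G (t ^+ (q ^ i)%N).
  elim: i => [|i IH]; first by rewrite expn0 expr1.
  by rewrite expnSr exprM root_frob.
set s := [seq t ^+ (q ^ i)%N | i <- iota 0 (size G)].
have : ~~ uniq s.
  apply/negP => U; have := max_poly_roots G0 _ _ (rs := s).
  rewrite size_map size_iota ltnn => H; suff: false by []; apply: H => //.
  by apply/allP => _ /mapP[i _ ->].
case/(uniqPn 0) => i [j [ij js]].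
rewrite size_map size_iota in js.
rewrite !(nth_map 0%N) ?size_iota ?(ltn_trans ij) // !nth_iota ?(ltn_trans ij) // !add0n.
move=> e; exists (j - i)%N; first by rewrite subn_gt0.
apply: (frN_inj (hqi i)); rewrite /frN -exprM -expnD subnK ?e //.
exact: ltnW.
Qed.

Lemma conj_power (t : E) n (σ : {rmorphism E -> E}) :
  (0 < n)%N -> t ^+ (q ^ n)%N = t -> (forall b, σ (A b) = A b) ->
  exists i, σ t = t ^+ (q ^ i)%N.
Proof.
move=> n0 tn fixA.
set L := [seq t ^+ (q ^ i)%N | i <- iota 0 n].
set h := \prod_(a <- L) ('X - a%:P).
have fh : map_poly (frN hq) h = h.
  rewrite /h rmorph_prod /=.
  rewrite (eq_bigr (fun a => 'X - (frN hq a)%:P)); last by move=> a _; rewrite map_polyXsubC.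
  rewrite -(big_map (frN hq) xpredT (fun a => 'X - a%:P)).
  apply: perm_big.
  rewrite /L; case: n n0 tn {L h} => // n _ tn.
  have fr i : frN hq (t ^+ (q ^ i)%N) = t ^+ (q ^ i.+1)%N by rewrite /frN -exprM expnSr.
  rewrite -map_comp.
  rewrite (eq_map (g := fun i => t ^+ (q ^ i.+1)%N)); last by move=> i /=; rewrite fr.
  rewrite {1}(_ : iota 0 n.+1 = rcons (iota 0 n) n); last by rewrite -cats1 -addn1 iotaD.
  rewrite map_rcons tn /= expn0 expr1 (iotaDl 1 0) -map_comp perm_rcons.
  rewrite (eq_map (g := fun i => t ^+ (q ^ i.+1)%N)) // => i /=; by rewrite add1n.
have coefq j : (h`_j) ^+ q = h`_j.
  by have := congr1 (fun p : {poly E} => p`_j) fh; rewrite coef_map.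
have fh2 : map_poly σ h = h.
  apply/polyP => j; rewrite coef_map /=; have [b ->] := @fix_in_image _ _ A _ (coefq j); exact: fixA.
have rt : root h t.
  rewrite root_prod_XsubC; apply/mapP; exists 0%N; rewrite ?expn0 ?expr1 //.
  by rewrite mem_iota add0n n0.
have : root h (σ t) by rewrite /root -fh2 horner_map (eqP rt) rmorph0.
by rewrite root_prod_XsubC => /mapP[i _ ->]; exists i.
Qed.

Lemma commute_conj (t : E) n (σ τ : {rmorphism E -> E}) :
  (0 < n)%N -> t ^+ (q ^ n)%N = t -> (forall b, σ (A b) = A b) ->
  (forall b, τ (A b) = A b) -> σ (τ t) = τ (σ t).
Proof.
move=> n0 tn fs ft.
have [i ei] := @conj_power t n σ n0 tn fs.
have [j ej] := @conj_power t n τ n0 tn ft.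
by rewrite ej rmorphXn ei rmorphXn ej -!exprM mulnC.
Qed.
End Main.

Section Homog.
Variables (K E : fieldType) (A : {rmorphism K -> E}).

Definition dehom (D : {mpoly K[2]}) : {poly K} :=
  \sum_(m <- msupp D) D@_m *: 'X^(m ord0).

Lemma ord2P (i : 'I_2) : i = ord0 \/ i = lift ord0 ord0.
Proof. by case: i => [[|[|//]]] H; [left|right]; apply: val_inj. Qed.

Lemma mdeg2 (m : 'X_{1..2}) : mdeg m = (m ord0 + m (lift ord0 ord0))%N.
Proof. by rewrite mdegE !big_ord_recl big_ord0 addn0. Qed.

Lemma eval_dehom (D : {mpoly K[2]}) r (v1 v2 t : E) :
  D \is r.-homog -> v1 = t * v2 ->
  eval2 (fun b => A b) v1 v2 D = v2 ^+ r * (map_poly A (dehom D)).[t].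
Proof.
move=> /dhomogP hD ev1; rewrite /eval2 /mmap /dehom raddf_sum horner_sum mulr_sumr.
apply: eq_big_seq => m hm.
rewrite /= map_polyZ map_polyXn hornerZ hornerXn.
have hD' : mdeg m = r := hD m hm.
rewrite -hD' mdeg2 /mmap1 !big_ord_recl big_ord0 /= mulr1 ev1 exprMn exprD.
ring.
Qed.

Lemma dehom_neq0 (D : {mpoly K[2]}) r : D \is r.-homog -> D != 0 -> dehom D != 0.
Proof.
move=> /dhomogP hD D0.
have [m hm] : exists m, m \in msupp D.
  by case E0: (msupp D) => [|m s]; [move: D0; rewrite -msupp_eq0 E0 | exists m; rewrite inE eqxx].
apply/eqP => /(congr1 (fun p : {poly K} => p`_(m ord0))).
rewrite /dehom coef0 coef_sum (bigD1_seq m hm (msupp_uniq D)) /= coefZ coefXn eqxx mulr1.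
rewrite big1_seq ?addr0; first by apply/eqP; rewrite -mcoeff_msupp.
move=> m' /andP[nm hm']; rewrite coefZ coefXn.
case: eqP => [e|]; last by rewrite mulr0.
case/negP: nm; apply/eqP/mnmP => i.
have e1 : mdeg m' = r := hD m' hm'. have e2 : mdeg m = r := hD m hm.
rewrite !mdeg2 in e1 e2.
case: (ord2P i) => ->; first by rewrite e.
by apply/eqP; rewrite -(eqn_add2l (m ord0)) {1}e e1 e2.
Qed.
End Homog.

Lemma galfix (F : fieldType) (E : splittingFieldType F) (s : gal_of (fullv : {vspace E})) (c : F) :
  s (c%:A) = c%:A.
Proof. by rewrite -(mulr1 c%:A) -scalerAl mul1r linearZ /= rmorph1. Qed.

Lemma alg_step (E : fieldType) (v1 v2 b : E) : b != 0 -> b * v1 + v2 != 0 ->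
  b * (v1 + v2) + v2 != 0 ->
  (v1 + b * v1 + v2) / (b * v1 + v2) = (v1 + v2) / (b * (v1 + v2) + v2) ->
  b * v1 ^+ 2 + (b + 2) * v1 * v2 + v2 ^+ 2 = 0.
Proof.
move=> b0 d1 d2 /eqP; rewrite eqr_div // => /eqP e.
have : b * (b * v1 ^+ 2 + (b + 2) * v1 * v2 + v2 ^+ 2) =
  (v1 + b * v1 + v2) * (b * (v1 + v2) + v2) - (v1 + v2) * (b * v1 + v2) by ring.
by rewrite e subrr => /eqP; rewrite mulf_eq0 (negbTE b0) /= => /eqP.
Qed.

Lemma alg_final (E : fieldType) (v1 v2 b1 b2 : E) : b1 != b2 ->
  b1 * v1 ^+ 2 + (b1 + 2) * v1 * v2 + v2 ^+ 2 = 0 ->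
  b2 * v1 ^+ 2 + (b2 + 2) * v1 * v2 + v2 ^+ 2 = 0 ->
  v1 * (v1 + v2) = 0.
Proof.
move=> nb e1 e2.
have : (b1 - b2) * (v1 * (v1 + v2)) =
  (b1 * v1 ^+ 2 + (b1 + 2) * v1 * v2 + v2 ^+ 2) - (b2 * v1 ^+ 2 + (b2 + 2) * v1 * v2 + v2 ^+ 2)
  by ring.
by rewrite e1 e2 subrr => /eqP; rewrite mulf_eq0 subr_eq0 (negbTE nb) /= => /eqP.
Qed.

Theorem theorem7p11
  (p q : nat) (K : finFieldType) (F : fieldType) (iota : {rmorphism K -> F})
  (E : splittingFieldType F) (a0 a1 a2 : F) (v1 v2 : E) :
  prime p -> (exists k : nat, q = p ^ k)%N -> (2 < q)%N ->
  p \in [pchar F] ->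
  #|K| = q ->
  regular_ext iota ->
  a2 != 0 ->
  irreducible_poly (qpoly2 q a0 a1 a2 %/ 'X) ->
  splittingFieldFor 1%VS (map_poly (in_alg E) (qpoly2 q a0 a1 a2)) fullv ->
  (* v1, v2 is an F_q-basis of the space V of roots of L in E *)
  root (map_poly (in_alg E) (qpoly2 q a0 a1 a2)) v1 ->
  root (map_poly (in_alg E) (qpoly2 q a0 a1 a2)) v2 ->
  (forall b1 b2 : K, (iota b1)%:A * v1 + (iota b2)%:A * v2 = 0 -> b1 = 0 /\ b2 = 0) ->
  (forall w : E, root (map_poly (in_alg E) (qpoly2 q a0 a1 a2)) w ->
     exists b1 b2 : K, w = (iota b1)%:A * v1 + (iota b2)%:A * v2) ->
  (* the Galois group, as a subgroup of GL(2,q) via the basis v1, v2, contains SL(2,q) *)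
  (forall M : 'M[K]_2, \det M = 1 ->
     exists2 s, s \in 'Gal((fullv : {vspace E}) / 1%VS)%g &
       s v1 = (iota (M ord0 ord0))%:A * v1 + (iota (M ord0 ord_max))%:A * v2 /\
       s v2 = (iota (M ord_max ord0))%:A * v1 + (iota (M ord_max ord_max))%:A * v2) ->
  forall r : nat, (0 < r)%N ->
  forall P Q : {mpoly K[2]}, P \is r.-homog -> Q \is r.-homog ->
    eval2 (fun b => (iota b)%:A) v1 v2 P = eval2 (fun b => (iota b)%:A) v1 v2 Q ->
    P = Q.
Proof.
move=> pp [k qk] q2 hpF cK _ _ _ _ _ _ hind _ hgal r _ P Q hP hQ he.
pose A : {rmorphism K -> E} := (in_alg E \o iota)%FUN.
have hpE : p \in [pchar E] := rmorph_pchar (in_alg E) hpF.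
have hq : [pchar E].-nat #|K| by rewrite cK qk pnatX (pnatE _ pp) hpE.
have Ab b : (iota b)%:A = A b by [].
have A1 : A 1 = 1 := rmorph1 A.
have A0 : A 0 = 0 := rmorph0 A.
have ind b1 b2 : A b1 * v1 + A b2 * v2 = 0 -> b1 = 0 /\ b2 = 0 := hind b1 b2.
have v20 : v2 != 0.
  apply/eqP => e; have := ind 0 1; rewrite A0 A1 e !mulr0 mul0r addr0 => /(_ erefl) [_].
  by move/eqP; rewrite oner_eq0.
have v10 : v1 != 0.
  apply/eqP => e; have := ind 1 0; rewrite A0 A1 e !mul0r mulr0 addr0 => /(_ erefl) [].
  by move/eqP; rewrite oner_eq0.
have v120 : v1 + v2 != 0.
  apply/eqP => e; have := ind 1 1; rewrite A1 !mul1r e => /(_ erefl) [].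
  by move/eqP; rewrite oner_eq0.
apply/eqP; rewrite -subr_eq0; apply/negP => D0.
have hD : P - Q \is r.-homog by rewrite rpredB.
pose t := v1 / v2.
have ev1 : v1 = t * v2 by rewrite /t divfK.
have eD : eval2 A v1 v2 (P - Q) = 0 by rewrite /eval2 mmapB; apply/eqP; rewrite subr_eq0; apply/eqP.
move: eD; rewrite (eval_dehom _ _ A _ _ _ _ _ hD ev1) => /eqP; rewrite mulf_eq0 expf_eq0 (negbTE v20) andbF /= => /eqP eD.
have [n n0 tn] := periodic _ _ A hq _ _ (dehom_neq0 _ _ _ hD (introN idP D0)) (introT eqP eD).
have fixA (s : gal_of (fullv : {vspace E})) b : s (A b) = A b := galfix _ _ s (iota b).
have comm (s1 s2 : gal_of (fullv : {vspace E})) : s1 (s2 t) = s2 (s1 t).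
  exact: (commute_conj _ _ A hq t n (gal_repr s1) (gal_repr s2) n0 tn (fixA s1) (fixA s2)).
pose Ml (b : K) : 'M[K]_2 := \matrix_(i, j) (if i == j then 1 else if i == ord_max then b else 0).
pose Mu : 'M[K]_2 := \matrix_(i, j) (if i == j then 1 else if i == ord0 then 1 else 0).
have detMl b : \det (Ml b) = 1.
  rewrite det_trig; first by rewrite !big_ord_recl big_ord0 !mxE /= !mulr1.
  apply/forallP => i; apply/forallP => j; apply/implyP.
  by case: (ord2P i) => ->; case: (ord2P j) => ->; rewrite ?mxE.
have detMu : \det Mu = 1.
  rewrite -det_tr det_trig; first by rewrite !big_ord_recl big_ord0 !mxE /= !mulr1.
  apply/forallP => i; apply/forallP => j; apply/implyP.
  by case: (ord2P i) => ->; case: (ord2P j) => ->; rewrite ?mxE.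
have [sU _ [hU1 hU2]] := hgal Mu detMu.
rewrite !mxE /= !Ab A1 A0 !mul1r mul0r ?add0r ?addr0 in hU1 hU2.
have key (b : K) : b != 0 -> A b * v1 ^+ 2 + (A b + 2) * v1 * v2 + v2 ^+ 2 = 0.
  move=> b0; have [sL _ [hL1 hL2]] := hgal (Ml b) (detMl b).
  rewrite !mxE /= !Ab A1 A0 !mul1r mul0r ?add0r ?addr0 in hL1 hL2.
  have c := comm sL sU.
  rewrite /t !fmorph_div /= in c. rewrite hU1 hU2 rmorphD /= hL1 hL2 rmorphD rmorphM /= fixA hU1 hU2 in c.
  apply: alg_step; last by rewrite -c addrA.
  - by rewrite fmorph_eq0.
  - apply/eqP => e; have := ind b 1; rewrite A1 mul1r e => /(_ erefl) [].
    by move/eqP; rewrite (negbTE b0).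
  - apply/eqP => e; have := ind b (b + 1); rewrite rmorphD A1 mulrDl mul1r addrA -mulrDr e => /(_ erefl) [].
    by move/eqP; rewrite (negbTE b0).
have [b hb] : exists b : K, (b != 0) && (b != 1).
  case: (pickP [pred x : K | (x != 0) && (x != 1)]) => [b hb|none]; first by exists b.
  have H : (#|K| <= #|[set (0 : K)%R; 1%R]|)%N.
    rewrite -cardsT; apply: subset_leq_card; apply/subsetP => x _; rewrite !inE.
    by have := none x; rewrite /= -negb_or => /negbFE.
  have le2 : (#|[set (0 : K)%R; 1%R]| <= 2)%N by rewrite cards2; case: (_ != _).
  by have := leq_trans H le2; rewrite cK leqNgt q2.
case/andP: hb => b0 b1.
have nb : A 1 != A b by rewrite (inj_eq (fmorph_inj A)) eq_sym.
have := alg_final _ _ _ _ _ nb (key 1 (oner_neq0 _)) (key b b0).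
by move/eqP; rewrite mulf_eq0 (negbTE v10) (negbTE v120).
Qed.
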